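(* Let $(G,O)$ be an equipped group such that the elements of $O$ generate $G$, and let $\widehat G$ be the associated $C$-group. If $G$ is a perfect group, then $\widehat G$ is isomorphic to the direct product $[\widehat G,\widehat G]\times(\widehat G/[\widehat G,\widehat G])$.
   Context: An equipped group is a pair $(G,O)$, $G$ a group, $O\subset G$ a union of finitely many conjugacy classes, $1\notin O$. The associated $C$-group $\widehat G$ (the $C$-group equivalent to $(G,O)$) is the group with generators $y_g$ ($g\in O$) and relations $y_h^{-1}y_gy_h=y_{h^{-1}gh}$ for all $g,h\in O$. *)

(* Defs.v *)
(* Possibly infinite groups are handled concretely:
   - the equipped group G is a type with Leibniz-equality group axioms;
   - the C-group hat G is built from its presentation as words in the
     generators y_g (g in O) and their inverses, modulo the least congruence
     generated by free cancellation and the defining relations;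
   - subgroups/quotients of hat G are "setoid groups" (carrier + equivalence
     relation + operations), and isomorphisms are taken up to these
     equivalences. *)
From Stdlib Require Import List Bool.
Import ListNotations.
Set Implicit Arguments.

Record group := Group {
  gcar :> Type;
  gmul : gcar -> gcar -> gcar;
  ginv : gcar -> gcar;
  gone : gcar;
  gmulA : forall x y z, gmul x (gmul y z) = gmul (gmul x y) z;
  gmul1l : forall x, gmul gone x = x;
  gmulVl : forall x, gmul (ginv x) x = gone }.

Section GroupDefs.
Variable G : group.

Definition gconj (h g : G) : G := gmul G (gmul G (ginv G h) g) h.
Definition gcomm (a b : G) : G :=
  gmul G (gmul G (gmul G (ginv G a) (ginv G b)) a) b.

Definition equipped (O : G -> Prop) : Prop :=
  (exists reps : list G,
     forall x : G, O x <-> exists r h : G, In r reps /\ x = gconj h r)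
  /\ ~ O (gone G).

Definition geval (w : list (G * bool)) : G :=
  fold_right (fun (p : G * bool) (acc : G) => gmul G (if snd p then fst p else ginv G (fst p)) acc)
             (gone G) w.

Definition generates (O : G -> Prop) : Prop :=
  forall x : G, exists w : list (G * bool),
    Forall (fun p => O (fst p)) w /\ x = geval w.

(** G is perfect: G = [G,G], i.e. every element is a product of commutators
    (the inverse of a commutator is a commutator). *)
Definition perfect : Prop :=
  forall x : G, exists l : list (G * G),
    x = fold_right (fun (p : G * G) (acc : G) => gmul G (gcomm (fst p) (snd p)) acc) (gone G) l.
End GroupDefs.

Record sgrp := SGrp {
  sg_car : Type;
  sg_eq : sg_car -> sg_car -> Prop;
  sg_mul : sg_car -> sg_car -> sg_car;
  sg_inv : sg_car -> sg_car;
  sg_one : sg_car }.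

Definition sg_iso (A B : sgrp) : Prop :=
  exists f : sg_car A -> sg_car B,
    (forall x y, sg_eq A x y -> sg_eq B (f x) (f y)) /\
    (forall x y, sg_eq B (f (sg_mul A x y)) (sg_mul B (f x) (f y))) /\
    (forall x y, sg_eq B (f x) (f y) -> sg_eq A x y) /\
    (forall b, exists a, sg_eq B (f a) b).

Definition sg_prod (A B : sgrp) : sgrp :=
  {| sg_car := (sg_car A * sg_car B)%type;
     sg_eq := fun x y => sg_eq A (fst x) (fst y) /\ sg_eq B (snd x) (snd y);
     sg_mul := fun x y => (sg_mul A (fst x) (fst y), sg_mul B (snd x) (snd y));
     sg_inv := fun x => (sg_inv A (fst x), sg_inv B (snd x));
     sg_one := (sg_one A, sg_one B) |}.

Section Hat.
Variable G : group.
Variable O : G -> Prop.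

(** a letter (g, true) is y_g, (g, false) is y_g^{-1} *)
Definition letter := ({g : G | O g} * bool)%type.
Definition word := list letter.

Definition lflip (a : letter) : letter := (fst a, negb (snd a)).
Definition winv (w : word) : word := rev (map lflip w).

(** the congruence defining the presentation: free group relations plus
    y_h^{-1} y_g y_h = y_{h^{-1} g h} for all g, h in O *)
Inductive hrel : word -> word -> Prop :=
| hr_refl u : hrel u u
| hr_sym u v : hrel u v -> hrel v u
| hr_trans u v w : hrel u v -> hrel v w -> hrel u w
| hr_app u u' v v' : hrel u u' -> hrel v v' -> hrel (u ++ v) (u' ++ v')
| hr_free (a : {g : G | O g}) (b : bool) : hrel [(a, b); (a, negb b)] []
| hr_conj (g h k : {g : G | O g}) :
    proj1_sig k = @gconj G (proj1_sig h) (proj1_sig g) ->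
    hrel [(h, false); (g, true); (h, true)] [(k, true)].

Definition hat : sgrp :=
  {| sg_car := word; sg_eq := hrel; sg_mul := @app letter;
     sg_inv := winv; sg_one := [] |}.

Definition wcomm (u v : word) : word := winv u ++ winv v ++ u ++ v.

Inductive hder : word -> Prop :=
| hd_comm u v : hder (wcomm u v)
| hd_one : hder []
| hd_mul u v : hder u -> hder v -> hder (u ++ v)
| hd_inv u : hder u -> hder (winv u)
| hd_eq u v : hrel u v -> hder u -> hder v.

Definition hat_der : sgrp :=
  {| sg_car := {w : word | hder w};
     sg_eq := fun x y => hrel (proj1_sig x) (proj1_sig y);
     sg_mul := fun x y => exist hder (proj1_sig x ++ proj1_sig y)
                         (hd_mul (proj2_sig x) (proj2_sig y));
     sg_inv := fun x => exist hder (winv (proj1_sig x)) (hd_inv (proj2_sig x));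
     sg_one := exist hder [] hd_one |}.

Definition hat_ab : sgrp :=
  {| sg_car := word;
     sg_eq := fun u v => hder (u ++ winv v);
     sg_mul := @app letter; sg_inv := winv; sg_one := [] |}.
End Hat.

(* Main.v *)
Require Import Defs.
From Stdlib Require Import List Bool Setoid Morphisms ClassicalEpsilon ProofIrrelevance FunctionalExtensionality PropExtensionality.
Import ListNotations.

Section Grp.
Variable G : group.
Local Notation "x ** y" := (gmul G x y) (at level 40, left associativity).
Local Notation "1" := (gone G).
Local Notation inv := (ginv G).

Lemma mulgV (x : G) : x ** inv x = 1.
Proof.
  assert (E: x ** inv x = (inv (inv x) ** inv x) ** (x ** inv x))
    by (rewrite gmulVl, gmul1l; reflexivity).
  rewrite E, <- gmulA, (gmulA G (inv x) x), gmulVl, gmul1l, gmulVl. reflexivity.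
Qed.
Lemma mulg1 (x : G) : x ** 1 = x.
Proof. rewrite <- (gmulVl G x), gmulA, mulgV, gmul1l. reflexivity. Qed.
Lemma inv_uniq (x y : G) : x ** y = 1 -> inv x = y.
Proof. intro H. rewrite <- (mulg1 (inv x)), <- H, gmulA, gmulVl, gmul1l. reflexivity. Qed.
Lemma mulgK (a b : G) : a ** b ** inv b = a.
Proof. rewrite <- gmulA, mulgV, mulg1. reflexivity. Qed.
Lemma mulgKV (a b : G) : a ** inv b ** b = a.
Proof. rewrite <- gmulA, gmulVl, mulg1. reflexivity. Qed.
Lemma invM (x y : G) : inv (x ** y) = inv y ** inv x.
Proof. apply inv_uniq. rewrite !gmulA, mulgK, mulgV. reflexivity. Qed.
Lemma invinv (x : G) : inv (inv x) = x.
Proof. apply inv_uniq. apply gmulVl. Qed.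
Lemma inv1 : inv 1 = 1.
Proof. apply inv_uniq. apply gmul1l. Qed.
Lemma gconjM (p q a : G) : gconj G q (gconj G p a) = gconj G (p ** q) a.
Proof. unfold gconj. rewrite invM, !gmulA. reflexivity. Qed.
Lemma gconj1 (a : G) : gconj G 1 a = a.
Proof. unfold gconj. rewrite inv1, gmul1l, mulg1. reflexivity. Qed.
End Grp.

Section Hat.
Variable G : group.
Variable O : G -> Prop.
Hypothesis HO : equipped G O.
Hypothesis Hgen : generates G O.
Hypothesis Hperf : perfect G.
Local Notation "x ** y" := (gmul G x y) (at level 40, left associativity).
Local Notation "1" := (gone G).
Local Notation inv := (ginv G).
Local Notation W := (word G O).
Local Notation L := (letter G O).

#[local] Instance hrel_eqv : Equivalence (@hrel G O).
Proof. split; [intro; apply hr_refl | intros ? ?; apply hr_sym | intros ? ? ?; apply hr_trans]. Qed.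
#[local] Instance app_prop : Proper (@hrel G O ==> @hrel G O ==> @hrel G O) (@app L).
Proof. intros ? ? H ? ? H'. apply hr_app; assumption. Qed.
#[local] Instance cons_prop : Proper (eq ==> @hrel G O ==> @hrel G O) (@cons L).
Proof. intros a ? <- ? ? H. apply (hr_app (hr_refl [a]) H). Qed.

Lemma free1 a b (w : W) : hrel ((a,b)::(a,negb b)::w) w.
Proof. exact (hr_app (hr_free G O a b) (hr_refl w)). Qed.
Lemma free2 a b (w : W) : hrel ((a,negb b)::(a,b)::w) w.
Proof. pose proof (free1 a (negb b) w) as H. rewrite negb_involutive in H. exact H. Qed.

Lemma winv_cons (l : L) (u : W) : winv (l :: u) = winv u ++ [lflip l].
Proof. reflexivity. Qed.
Lemma winv_app (u v : W) : winv (u ++ v) = winv v ++ winv u.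
Proof. unfold winv. rewrite map_app, rev_app_distr. reflexivity. Qed.
Lemma winv_winv (u : W) : winv (winv u) = u.
Proof.
  unfold winv. rewrite map_rev, rev_involutive, map_map.
  induction u as [|[a b] u IH]; simpl; [reflexivity|]. rewrite IH; destruct b; reflexivity.
Qed.

Lemma cancel_r (u w : W) : hrel (u ++ winv u ++ w) w.
Proof.
  revert w; induction u as [|[a b] u IH]; intro w; [reflexivity|].
  rewrite winv_cons. simpl. rewrite <- app_assoc. rewrite IH. apply free1.
Qed.
Lemma cancel_l (u w : W) : hrel (winv u ++ u ++ w) w.
Proof.
  revert w; induction u as [|[a b] u IH]; intro w; [reflexivity|].
  rewrite winv_cons. rewrite <- app_assoc. simpl. unfold lflip; simpl. rewrite free2. apply IH.
Qed.

#[local] Instance winv_prop : Proper (@hrel G O ==> @hrel G O) (@winv G O).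
Proof.
  intros u v H.
  transitivity (winv u ++ v ++ winv v ++ []).
  { rewrite cancel_r, app_nil_r. reflexivity. }
  transitivity (winv u ++ u ++ winv v ++ []).
  { apply hr_app; [reflexivity|]. apply hr_app; [symmetry; exact H | reflexivity]. }
  rewrite cancel_l, app_nil_r. reflexivity.
Qed.

Definition lval (l : L) : G := if snd l then proj1_sig (fst l) else inv (proj1_sig (fst l)).
Definition rho (w : W) : G := fold_right (fun l acc => lval l ** acc) 1 w.
Lemma rho_app u v : rho (u ++ v) = rho u ** rho v.
Proof. induction u; simpl. rewrite gmul1l; reflexivity. rewrite IHu, gmulA. reflexivity. Qed.
Lemma rho_winv u : rho (winv u) = inv (rho u).
Proof.
  induction u as [|[a b] u IH]. simpl. rewrite inv1; reflexivity.
  rewrite winv_cons, rho_app, IH. simpl. rewrite invM, mulg1.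
  unfold lval; destruct b; simpl; rewrite ?invinv; reflexivity.
Qed.

Lemma sig_eq (x y : {g : G | O g}) : proj1_sig x = proj1_sig y -> x = y.
Proof. destruct x, y; simpl; intros ->. f_equal. apply proof_irrelevance. Qed.

Lemma Oconj x g : O g -> O (gconj G x g).
Proof.
  destruct HO as [[reps Hr] _]. intro Hg. apply Hr in Hg.
  destruct Hg as [r [h [Hin ->]]]. apply Hr. exists r, (h ** x). split; [assumption|].
  apply gconjM.
Qed.

Lemma conj1 (l : L) (a : {g : G | O g}) : exists a' : {g : G | O g},
  proj1_sig a' = gconj G (lval l) (proj1_sig a) /\
  forall w : W, hrel (lflip l :: (a,true) :: l :: w) ((a',true) :: w).
Proof.
  destruct l as [h [|]]; simpl.
  - exists (exist O _ (Oconj (proj1_sig h) _ (proj2_sig a))). split; [reflexivity|].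
    intro w. apply (hr_app (hr_conj G O a h (exist O _ (Oconj (proj1_sig h) _ (proj2_sig a))) eq_refl) (hr_refl w)).
  - set (k := exist O _ (Oconj (inv (proj1_sig h)) _ (proj2_sig a))).
    exists k. split; [reflexivity|]. intro w.
    assert (Hk : proj1_sig a = gconj G (proj1_sig h) (proj1_sig k)).
    { simpl. rewrite gconjM, gmulVl, gconj1. reflexivity. }
    pose proof (hr_app (hr_conj G O k h a Hk) (hr_refl ((h,false)::w))) as H. simpl in H.
    rewrite <- H. 
    rewrite (free1 h true ((k,true)::(h,true)::(h,false)::w)). cbn [app].
    rewrite (free1 h true w). reflexivity.
Qed.

Lemma conjw (X : W) : forall (a : {g : G | O g}), exists a' : {g : G | O g},
  proj1_sig a' = gconj G (rho X) (proj1_sig a) /\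
  forall w : W, hrel (winv X ++ (a,true) :: X ++ w) ((a',true) :: w).
Proof.
  induction X as [|l X IH]; intro a.
  - exists a. simpl. rewrite gconj1. split; reflexivity.
  - destruct (conj1 l a) as [b [Hb Hbw]]. destruct (IH b) as [a' [Ha' Hw]].
    exists a'. split. simpl. rewrite Ha', Hb, gconjM. reflexivity.
    intro w. rewrite winv_cons, <- app_assoc. simpl. rewrite Hbw. apply Hw.
Qed.

Lemma lift_gen w : Forall (fun p : G * bool => O (fst p)) w -> exists X : W, rho X = geval G w.
Proof.
  induction 1 as [|[g b] w Hg Hw IH]. exists []. reflexivity.
  destruct IH as [X HX]. exists ((exist O g Hg, b) :: X). simpl. rewrite HX.
  unfold lval; destruct b; reflexivity.
Qed.
Lemma lift (x : G) : exists X : W, rho X = x.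
Proof. destruct (Hgen x) as [w [Hw ->]]. apply lift_gen; assumption. Qed.

Lemma lift_der (x : G) : exists w : W, hder w /\ rho w = x.
Proof.
  destruct (Hperf x) as [l ->]. induction l as [|[a b] l [w [Hw Hr]]].
  - exists []. split. apply hd_one. reflexivity.
  - destruct (lift a) as [A HA]. destruct (lift b) as [B HB].
    exists (wcomm A B ++ w). split. apply hd_mul; [apply hd_comm | assumption].
    unfold wcomm. rewrite !rho_app, !rho_winv, HA, HB, Hr. simpl. unfold gcomm.
    rewrite !gmulA. reflexivity.
Qed.

Lemma central (z : W) : rho z = 1 -> forall u w : W, hrel (u ++ z ++ w) (z ++ u ++ w).
Proof.
  intro Hz.
  assert (Ht : forall a (w : W), hrel ((a,true) :: z ++ w) (z ++ (a,true) :: w)).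
  { intros a w. destruct (conjw z a) as [a' [Ha' H]].
    rewrite Hz, gconj1 in Ha'. apply sig_eq in Ha'. subst a'.
    transitivity (z ++ winv z ++ (a,true) :: z ++ w).
    symmetry; apply cancel_r. rewrite H. reflexivity. }
  assert (Hl : forall l (w : W), hrel (l :: z ++ w) (z ++ l :: w)).
  { intros [a [|]] w. apply Ht.
    transitivity ((a,false) :: z ++ (a,true) :: (a,false) :: w).
    { rewrite (free1 a true w). reflexivity. }
    rewrite <- Ht. rewrite (free2 a true). reflexivity. }
  induction u as [|l u IH]; intro w. reflexivity.
  simpl. rewrite IH. apply Hl.
Qed.

Definition Cl (g : G) : G -> Prop := fun g' => exists x, g' = gconj G x g.
Definition Zspec (P : G -> Prop) (z : W) : Prop :=
  rho z = 1 /\ forall a' : {g : G | O g}, P (proj1_sig a') -> hder ((a',true) :: winv z).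
Definition zsel (P : G -> Prop) : W := epsilon (inhabits []) (Zspec P).
Definition zf (a : {g : G | O g}) : W := zsel (Cl (proj1_sig a)).

Lemma zf_spec a : Zspec (Cl (proj1_sig a)) (zf a).
Proof.
  unfold zf, zsel. apply epsilon_spec.
  destruct (lift_der (proj1_sig a)) as [w [Hw Hr]].
  exists (winv w ++ [(a,true)]). split.
  { rewrite rho_app, rho_winv, Hr. simpl. rewrite mulg1, gmulVl. reflexivity. }
  intros a' [x Hx]. destruct (lift x) as [X HX].
  destruct (conjw X a) as [a'' [Ha'' H]].
  rewrite HX, <- Hx in Ha''. apply sig_eq in Ha''. subst a''.
  rewrite winv_app, winv_winv. simpl.
  apply (hd_eq (u := wcomm X [(a,false)] ++ w)); [| apply hd_mul; [apply hd_comm|assumption]].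
  unfold wcomm. simpl. rewrite <- app_assoc. simpl. unfold lflip. simpl. rewrite <- app_assoc. simpl. rewrite H. reflexivity.
Qed.

Lemma zf_one a : rho (zf a) = 1.
Proof. apply (zf_spec a). Qed.

Definition rl (l : L) : W :=
  if snd l then (fst l, true) :: winv (zf (fst l)) else zf (fst l) ++ [(fst l, false)].
Definition rw (w : W) : W := fold_right (fun l acc => rl l ++ acc) [] w.
Lemma rw_app u v : rw (u ++ v) = rw u ++ rw v.
Proof. induction u; simpl. reflexivity. rewrite IHu, app_assoc. reflexivity. Qed.
Lemma rw_winv u : rw (winv u) = winv (rw u).
Proof.
  induction u as [|[a b] u IH]. reflexivity.
  rewrite winv_cons, rw_app, IH. simpl. rewrite winv_app, app_nil_r. f_equal.
  destruct b; simpl.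
  - unfold rl, lflip; simpl. rewrite winv_cons, winv_winv. reflexivity.
  - unfold rl, lflip; simpl. rewrite winv_app. reflexivity.
Qed.

Lemma zf_conj (g h k : {g : G | O g}) :
  proj1_sig k = gconj G (proj1_sig h) (proj1_sig g) -> zf k = zf g.
Proof.
  intro Hk. unfold zf. f_equal. rewrite Hk. apply functional_extensionality. intro y.
  apply propositional_extensionality. unfold Cl. split.
  - intros [x ->]. exists (proj1_sig h ** x). apply gconjM.
  - intros [x ->]. exists (inv (proj1_sig h) ** x). rewrite gconjM, gmulA, mulgV, gmul1l.
    reflexivity.
Qed.

Lemma rw_resp u v : hrel u v -> hrel (rw u) (rw v).
Proof.
  induction 1.
  - reflexivity.
  - symmetry; assumption.
  - etransitivity; eassumption.
  - rewrite !rw_app, IHhrel1, IHhrel2. reflexivity.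
  - destruct b; simpl; unfold rl; simpl; rewrite ?app_nil_r.
    + rewrite cancel_l. apply (free1 a true).
    + rewrite <- app_assoc. simpl. rewrite (free2 a true). pose proof (cancel_r (zf a) []) as C; rewrite app_nil_r in C; exact C.
  - simpl. unfold rl; simpl. rewrite (zf_conj g h k H). rewrite !app_nil_r, <- app_assoc. simpl.
    assert (Hzg : rho (winv (zf g)) = 1) by (rewrite rho_winv, zf_one; apply inv1).
    transitivity (zf h ++ [(h,false); (g,true)] ++ [(h,true)] ++ winv (zf g) ++ winv (zf h)).
    { apply hr_app; [reflexivity|].
      symmetry; exact (hr_app (hr_refl [(h,false);(g,true)]) (central _ Hzg [(h,true)] (winv (zf h)))). }
    set (X := (h,false) :: (g,true) :: (h,true) :: winv (zf g)).
    transitivity (X ++ zf h ++ winv (zf h) ++ []).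
    { rewrite app_nil_r. pose proof (central (zf h) (zf_one h) X (winv (zf h))) as C.
      symmetry. etransitivity; [exact C|]. subst X. simpl. reflexivity. }
    rewrite cancel_r, app_nil_r. subst X.
    apply (hr_app (hr_conj G O g h k H) (hr_refl _)).
Qed.

Lemma rw_hder w : hder (rw w).
Proof.
  induction w as [|[a b] w IH]. apply hd_one.
  simpl. apply hd_mul; [|assumption]. unfold rl; destruct b; simpl.
  - apply (proj2 (zf_spec a)). exists 1. symmetry. apply gconj1.
  - assert (E : zf a ++ [(a,false)] = winv ((a,true) :: winv (zf a)))
      by (rewrite winv_cons, winv_winv; reflexivity).
    rewrite E. apply hd_inv. apply (proj2 (zf_spec a)). exists 1. symmetry. apply gconj1.
Qed.

Lemma rw_decomp u : exists c : W, rho c = 1 /\ forall w, hrel (rw u ++ w) (u ++ c ++ w).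
Proof.
  induction u as [|[a b] u [c [Hc IH]]].
  - exists []. split; reflexivity.
  - assert (Hz : rho (winv (zf a)) = 1) by (rewrite rho_winv, zf_one; apply inv1).
    destruct b; simpl; unfold rl; simpl.
    + exists (winv (zf a) ++ c). split. rewrite rho_app, Hz, Hc; apply gmul1l.
      intro w. rewrite <- app_assoc, IH.
      pose proof (central _ Hz u (c ++ w)) as C. rewrite <- !app_assoc, <- C. reflexivity.
    + exists (zf a ++ c). split. rewrite rho_app, zf_one, Hc; apply gmul1l.
      intro w. rewrite <- !app_assoc, IH.
      pose proof (central _ (zf_one a) ((a,false) :: u) (c ++ w)) as C. simpl in C.
      rewrite <- ?app_assoc. symmetry. rewrite C. reflexivity.
Qed.

Lemma rw_rel u : exists c : W, rho c = 1 /\ hrel (rw u) (u ++ c).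
Proof.
  destruct (rw_decomp u) as [c [Hc H]]. exists c. split; [assumption|].
  pose proof (H []) as H'. rewrite !app_nil_r in H'. exact H'.
Qed.

Lemma comm_c u v c1 c2 : rho c1 = 1 -> rho c2 = 1 ->
  hrel (wcomm (u ++ c1) (v ++ c2)) (wcomm u v).
Proof.
  intros H1 H2. unfold wcomm. rewrite !winv_app, <- !app_assoc.
  assert (H2' : rho (winv c2) = 1) by (rewrite rho_winv, H2; apply inv1).
  transitivity (winv c1 ++ c1 ++ winv u ++ winv c2 ++ winv v ++ u ++ v ++ c2).
  { apply hr_app; [reflexivity|].
    pose proof (central c1 H1 (winv u ++ winv c2 ++ winv v ++ u) (v ++ c2)) as C.
    rewrite <- !app_assoc in C. exact C. }
  rewrite cancel_l.
  rewrite (central _ H2' (winv u)).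
  pose proof (central c2 H2 (winv u ++ winv v ++ u ++ v) []) as C.
  rewrite <- !app_assoc, app_nil_r in C. rewrite C, app_nil_r.
  rewrite cancel_l. reflexivity.
Qed.

#[local] Instance wcomm_prop : Proper (@hrel G O ==> @hrel G O ==> @hrel G O) (@wcomm G O).
Proof. intros ? ? H ? ? H'. unfold wcomm. rewrite H, H'. reflexivity. Qed.

Lemma rw_id w : hder w -> hrel (rw w) w.
Proof.
  induction 1.
  - unfold wcomm. rewrite !rw_app, !rw_winv. fold (wcomm (rw u) (rw v)).
    destruct (rw_rel u) as [c1 [H1 E1]]. destruct (rw_rel v) as [c2 [H2 E2]].
    rewrite E1, E2. apply comm_c; assumption.
  - reflexivity.
  - rewrite rw_app, IHhder1, IHhder2. reflexivity.
  - rewrite rw_winv, IHhder. reflexivity.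
  - transitivity (rw u). apply rw_resp. symmetry. assumption.
    rewrite IHhder. assumption.
Qed.

Lemma cr0 (u : W) : hrel (u ++ winv u) [].
Proof. pose proof (cancel_r u []) as C. rewrite app_nil_r in C. exact C. Qed.
Lemma cl0 (u : W) : hrel (winv u ++ u) [].
Proof. pose proof (cancel_l u []) as C. rewrite app_nil_r in C. exact C. Qed.
Lemma hder_rel (u : W) : hrel u [] -> hder u.
Proof. intro H. apply (hd_eq (u := [])). symmetry; exact H. apply hd_one. Qed.

Lemma iso : sg_iso (hat G O) (sg_prod (hat_der G O) (hat_ab G O)).
Proof.
  exists (fun w => (exist (@hder G O) (rw w) (rw_hder w), w)). split; [|split; [|split]].
  - intros x y H. simpl. split. apply rw_resp; exact H.
    apply hder_rel. rewrite H. apply cr0.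
  - intros x y. simpl. split. rewrite rw_app. reflexivity.
    apply hder_rel. apply cr0.
  - intros x y [H1 H2]. simpl in *.
    assert (Hd : hrel (x ++ winv y) []).
    { rewrite <- (rw_id _ H2). rewrite rw_app, rw_winv, H1. apply cr0. }
    transitivity ((x ++ winv y) ++ y).
    { rewrite <- app_assoc. symmetry. pose proof (cancel_l y []) as C.
      rewrite app_nil_r in C. rewrite C, app_nil_r. reflexivity. }
    rewrite Hd. reflexivity.
  - intros [[d Hd] a]. exists (d ++ winv (rw a) ++ a). simpl. split.
    + rewrite !rw_app, rw_winv, (rw_id _ (rw_hder a)).
      rewrite cl0, app_nil_r. apply rw_id; assumption.
    + rewrite <- !app_assoc. apply (hd_eq (u := d ++ winv (rw a))); [rewrite (cr0 a), app_nil_r; reflexivity|].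
      apply hd_mul; [assumption|]. apply hd_inv, rw_hder.
Qed.
End Hat.

Theorem proposition2p14 (G : group) (O : G -> Prop)
  (HO : @equipped G O) (Hgen : @generates G O) (Hperf : perfect G) :
  sg_iso (@hat G O) (sg_prod (@hat_der G O) (@hat_ab G O)).
Proof. exact (iso G O HO Hgen Hperf). Qed.
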